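(* Let $n\ge1$ and let $\mathfrak{c}=\{c_{ij}\}_{1\le i<j\le n}$, $\mathfrak{\ell}=\{\ell_1,\dots,\ell_n\}$ be integers. Let $C=C(\mathfrak{c},\mathfrak{\ell})$ be the support of the associated Grossberg–Karshon twisted cube, $\{m_\sigma\}_{\sigma\in\{+,-\}^n}$ the Cartier data of the divisor $D(\mathfrak{c},\mathfrak{\ell})$ on $X(\mathfrak{c})$, and $P_{D(\mathfrak{c},\mathfrak{\ell})}$ the associated polytope. Then the following are equivalent: (a) $C$ is closed in $\mathbb{R}^n$ (Euclidean topology); (b) $m_\sigma\in C$ for all $\sigma$; (c) $m_{\sigma,k}\ge0$ for all $\sigma$ and all $1\le k\le n$, where $m_\sigma=(m_{\sigma,1},\dots,m_{\sigma,n})$; (d) $\mathfrak{c},\mathfrak{\ell}$ satisfy condition (P); (e) $C=P_{D(\mathfrak{c},\mathfrak{\ell})}$.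
   Context: Functions on $\mathbb{R}^n$: $A_n(x)=\ell_n$ and $A_j(x)=\ell_j-\sum_{k=j+1}^n c_{jk}x_k$ for $1\le j\le n-1$ (so $A_j$ depends only on $x_{j+1},\dots,x_n$). $C(\mathfrak{c},\mathfrak{\ell})$ is the set of $x\in\mathbb{R}^n$ such that for every $1\le k\le n$: $A_k(x)<x_k<0$ or $0\le x_k\le A_k(x)$. Condition (P): $\ell_n\ge0$, and for every $1\le k\le n-1$: whenever $(x_{k+1},\dots,x_n)$ satisfies $0\le x_i\le A_i(x_{i+1},\dots,x_n)$ for all $k+1\le i\le n$, then $A_k(x_{k+1},\dots,x_n)\ge0$. Toric data: $e_1^+,\dots,e_n^+$ standard basis of $\mathbb{R}^n$, $e_j^-:=-e_j^+-\sum_{k>j}c_{jk}e_k^+$; $\Sigma_{\mathfrak{c}}$ is the fan of cones generated by subsets of $\{e_1^\pm,\dots,e_n^\pm\}$ containing no pair $\{e_j^+,e_j^-\}$, with maximal cones $\mathrm{Cone}\{e_1^{\sigma_1},\dots,e_n^{\sigma_n}\}$, $\sigma\in\{+,-\}^n$; $X(\mathfrak{c})$ its smooth toric variety; $D(\mathfrak{c},\mathfrak{\ell})=\sum_j\ell_jD_{e_j^-}$ with $D_{e_j^-}$ the torus-invariant divisor of the ray through $e_j^-$. Its Cartier data is the collection $m_\sigma\in\mathbb{Z}^n$ with $\langle m_\sigma,u\rangle=-a_u$ for each ray generator $u\in\{e_1^{\sigma_1},\dots,e_n^{\sigma_n}\}$ of $\sigma$, where $a_{e_j^+}=0$, $a_{e_j^-}=\ell_j$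 and $\langle\cdot,\cdot\rangle$ is the standard inner product. $P_{D(\mathfrak{c},\mathfrak{\ell})}=\{x\in\mathbb{R}^n: 0\le x_j\le A_j(x)\ \forall j\}$. *)

(* Defs.v *)
(* Points of R^n are row vectors 'rV[R]_n,
   with the (sup-norm = Euclidean) topology of mathcomp-analysis. *)
From HB Require Import structures.
From mathcomp Require Import all_boot all_order all_algebra.
From mathcomp Require Import all_classical all_reals all_analysis.
Set Implicit Arguments. Unset Strict Implicit. Unset Printing Implicit Defensive.
Import Order.TTheory GRing.Theory Num.Theory.
Local Open Scope ring_scope.
Local Open Scope classical_set_scope.

(* c : 'I_n -> 'I_n -> int  (only c j k with j < k is used), l : 'I_n -> int. *)

Definition Afun (R : realType) (n : nat) (c : 'I_n -> 'I_n -> int)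
  (l : 'I_n -> int) (j : 'I_n) (x : 'rV[R]_n) : R :=
  (l j)%:~R - \sum_(k < n | (j < k)%N) (c j k)%:~R * x ord0 k.

Definition GKsupport (R : realType) (n : nat) (c : 'I_n -> 'I_n -> int)
  (l : 'I_n -> int) : set 'rV[R]_n :=
  [set x : 'rV[R]_n | forall k : 'I_n,
     (Afun c l k x < x ord0 k < 0) \/ (0 <= x ord0 k <= Afun c l k x)].

Definition PD (R : realType) (n : nat) (c : 'I_n -> 'I_n -> int)
  (l : 'I_n -> int) : set 'rV[R]_n :=
  [set x : 'rV[R]_n | forall j : 'I_n, 0 <= x ord0 j <= Afun c l j x].

Definition condP (R : realType) (n : nat) (c : 'I_n -> 'I_n -> int)
  (l : 'I_n -> int) : Prop :=
  (forall k : 'I_n, k.+1 = n -> 0 <= l k) /\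
  (forall k : 'I_n, (k.+1 < n)%N ->
     forall x : 'rV[R]_n,
       (forall i : 'I_n, (k < i)%N -> 0 <= x ord0 i <= Afun c l i x) ->
       0 <= Afun c l k x).

Definition e_plus (n : nat) (j : 'I_n) : 'rV[int]_n := delta_mx ord0 j.
Definition e_minus (n : nat) (c : 'I_n -> 'I_n -> int) (j : 'I_n) : 'rV[int]_n :=
  - e_plus j - \sum_(k < n | (j < k)%N) c j k *: e_plus k.

(* Sign vectors sigma in {+,-}^n : true = +, false = -. *)
Definition e_sign (n : nat) (c : 'I_n -> 'I_n -> int) (s : 'I_n -> bool)
  (j : 'I_n) : 'rV[int]_n := if s j then e_plus j else e_minus c j.

(* Coefficient a_u of D(c,l) = sum_j l_j D_{e_j^-}: a_{e_j^+} = 0, a_{e_j^-} = l_j. *)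
Definition a_sign (n : nat) (l : 'I_n -> int) (s : 'I_n -> bool) (j : 'I_n) : int :=
  if s j then 0 else l j.

Definition dotZ (n : nat) (u v : 'rV[int]_n) : int := \sum_(i < n) u ord0 i * v ord0 i.

(* m is the Cartier data of D(c,l) on X(c): <m_sigma, u> = - a_u for each ray
   generator u = e_j^{sigma_j} of the maximal cone sigma. *)
Definition is_cartier_data (n : nat) (c : 'I_n -> 'I_n -> int) (l : 'I_n -> int)
  (m : ('I_n -> bool) -> 'rV[int]_n) : Prop :=
  forall (s : 'I_n -> bool) (j : 'I_n), dotZ (m s) (e_sign c s j) = - a_sign l s j.

Definition toR (R : realType) (n : nat) (v : 'rV[int]_n) : 'rV[R]_n :=
  map_mx (fun z : int => z%:~R) v.

(* Main.v *)
Require Import Defs.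
From HB Require Import structures.
From mathcomp Require Import all_boot all_order all_algebra.
From mathcomp Require Import all_classical all_reals all_analysis.
From mathcomp Require Import ring lra zify.
Import Order.TTheory GRing.Theory Num.Theory.
Import numFieldNormedType.Exports.
Local Open Scope ring_scope.
Local Open Scope classical_set_scope.

Section S.
Variables (R : realType) (n : nat) (c : 'I_n -> 'I_n -> int) (l : 'I_n -> int).

Lemma down_ind (P : 'I_n -> Prop) :
  (forall j : 'I_n, (forall i : 'I_n, (j < i)%N -> P i) -> P j) -> forall j, P j.
Proof.
move=> H.
have : forall d (j : 'I_n), (n - j <= d)%N -> P j.
  elim=> [|d IH] j hj.
    have := ltn_ord j; lia.
  apply: H => i ji; apply: IH; have := ltn_ord i; lia.
move=> H' j; apply: (H' n); lia.
Qed.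

Lemma Afun_local (j : 'I_n) (x y : 'rV[R]_n) :
  (forall k : 'I_n, (j < k)%N -> x ord0 k = y ord0 k) -> Afun c l j x = Afun c l j y.
Proof. by move=> H; rewrite /Afun; congr (_ - _); apply: eq_bigr => k jk; rewrite H. Qed.

Lemma sum_delta (F : 'I_n -> int) (k : 'I_n) :
  \sum_(i < n) F i * (i == k)%:R = F k.
Proof.
rewrite (bigD1 k) //= eqxx mulr1 big1 ?addr0 // => i /negbTE ->; by rewrite mulr0.
Qed.

Lemma dotZ_plus (u : 'rV[int]_n) j : dotZ u (e_plus j) = u ord0 j.
Proof.
rewrite /dotZ -[RHS](sum_delta (fun i => u ord0 i)); apply: eq_bigr => i _.
by rewrite /e_plus mxE eqxx.
Qed.

Lemma dotZ_minus (u : 'rV[int]_n) j :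
  dotZ u (e_minus c j) = - u ord0 j - \sum_(k < n | (j < k)%N) c j k * u ord0 k.
Proof.
rewrite /dotZ /e_minus.
rewrite /e_plus; under eq_bigr => i _ do rewrite !mxE summxE mulrBr.
rewrite sumrB; congr (_ - _).
  rewrite -[RHS](sum_delta (fun i => - u ord0 i)); apply: eq_bigr => i _.
  by rewrite eqxx /= mulrN mulNr.
under eq_bigr => i _ do rewrite mulr_sumr.
rewrite exchange_big /=; apply: eq_bigr => k _.
rewrite -(sum_delta (fun i => c j k * u ord0 i)); apply: eq_bigr => i _.
by rewrite !mxE eqxx mulrCA mulrA.
Qed.

Variable m : ('I_n -> bool) -> 'rV[int]_n.
Hypothesis hm : is_cartier_data c l m.

Lemma mE s j : m s ord0 j =
  if s j then 0 else l j - \sum_(k < n | (j < k)%N) c j k * m s ord0 k.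
Proof.
have := hm s j; rewrite /e_sign /a_sign; case: (s j).
  by rewrite dotZ_plus oppr0.
rewrite dotZ_minus => H; lia.
Qed.

Definition MR s : 'rV[R]_n := toR R (m s).

Lemma MRE s i : MR s ord0 i = (m s ord0 i)%:~R.
Proof. by rewrite mxE. Qed.

Lemma mRE s j : MR s ord0 j = if s j then 0 else Afun c l j (MR s).
Proof.
rewrite MRE mE; case: (s j) => //.
rewrite intrB rmorph_sum /Afun; congr (_ - _); apply: eq_bigr => k _.
by rewrite rmorphM MRE.
Qed.


Definition good (x : 'rV[R]_n) (i : 'I_n) := 0 <= x ord0 i <= Afun c l i x.

Lemma m_agree s s' (j : 'I_n) : (forall i : 'I_n, (j < i)%N -> s i = s' i) ->
  forall i : 'I_n, (j < i)%N -> m s ord0 i = m s' ord0 i.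
Proof.
move=> H; apply: (down_ind (fun i => (j < i)%N -> _)) => i IH ji.
rewrite !mE H //; case: (s' i) => //; congr (_ - _); apply: eq_bigr => k ik.
by rewrite IH //; exact: ltn_trans ji ik.
Qed.

Lemma MR_agree s s' (j : 'I_n) : (forall i : 'I_n, (j < i)%N -> s i = s' i) ->
  forall i : 'I_n, (j < i)%N -> MR s ord0 i = MR s' ord0 i.
Proof. by move=> H i ji; rewrite !MRE (@m_agree s s' j H i ji). Qed.

Lemma ordF {k i : 'I_n} : (k < i)%N -> (i == k) = false.
Proof. by move=> h; apply/eqP => e; rewrite e ltnn in h. Qed.

Definition sflip (s : 'I_n -> bool) (j : 'I_n) (b : bool) := fun i => if i == j then b else s i.

Lemma Afun_MR s k : Afun c l k (MR s) = MR (sflip s k false) ord0 k.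
Proof.
rewrite mRE /sflip eqxx /=; apply: Afun_local => i ki.
by apply: MR_agree ki => i' ki'; rewrite (ordF ki').
Qed.

Lemma Afun_last (k : 'I_n) (x : 'rV[R]_n) : k.+1 = n -> Afun c l k x = (l k)%:~R.
Proof.
move=> hk; rewrite /Afun big1 ?subr0 // => i ki; exfalso; have := ltn_ord i; lia.
Qed.

Definition W := forall (k : 'I_n) (x : 'rV[R]_n),
  (forall i : 'I_n, (k < i)%N -> good x i) -> 0 <= Afun c l k x.

Lemma condP_W : condP R c l <-> W.
Proof.
split.
  move=> [h1 h2] k x hx; case: (ltnP k.+1 n) => hk; first exact: h2.
  have e : k.+1 = n by have := ltn_ord k; lia.
  by rewrite Afun_last // ler0z; exact: h1.
move=> hW; split.
  move=> k hk; have := hW k 0; rewrite Afun_last // ler0z; apply.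
  by move=> i ki; exfalso; have := ltn_ord i; lia.
by move=> k _ x hx; exact: hW.
Qed.

Lemma W_to_c : W -> forall s k, 0 <= m s ord0 k.
Proof.
move=> hW s.
have hg : forall k, good (MR s) k.
  apply: down_ind => k IH; have hA := hW k _ IH.
  by rewrite /good mRE; case: (s k) => /=; rewrite ?lexx ?hA.
by move=> k; have := hg k; rewrite /good MRE ler0z => /andP[].
Qed.

Lemma b_iff_c : (forall s, GKsupport c l (MR s)) <-> (forall s k, 0 <= m s ord0 k).
Proof.
split.
  move=> h s k; rewrite -(ler0z R) -MRE; have := h s k; rewrite mRE.
  case: (s k) => /=; first by rewrite lexx.
  by case=> /andP[h1 h2] //; rewrite ltxx in h1.
move=> h s k; right.
have hA : 0 <= Afun c l k (MR s) by rewrite Afun_MR MRE ler0z.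
by rewrite mRE; case: (s k); rewrite ?lexx ?hA.
Qed.

Definition g (k i : 'I_n) : R := if (k < i)%N then (c k i)%:~R else 0.

Lemma Afun_g k y : Afun c l k y = (l k)%:~R + \sum_i (- g k i) * y ord0 i.
Proof.
rewrite /Afun big_mkcond /=.
rewrite [in RHS](eq_bigr (fun i => - (g k i * y ord0 i))); last by move=> i _; rewrite mulNr.
rewrite sumrN; congr (_ - _); apply: eq_bigr => i _; rewrite /g.
by case: ifP => _; rewrite ?mul0r.
Qed.

Lemma sum_local (b : 'I_n -> R) (j : 'I_n) (y z : 'rV[R]_n) :
  (forall i : 'I_n, (i <= j)%N -> b i = 0) ->
  (forall i : 'I_n, (j < i)%N -> y ord0 i = z ord0 i) ->
  \sum_i b i * y ord0 i = \sum_i b i * z ord0 i.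
Proof.
move=> hb hyz; apply: eq_bigr => i _; case: (leqP i j) => h.
  by rewrite hb // !mul0r.
by rewrite hyz.
Qed.

Lemma split_j (a : R) (b : 'I_n -> R) (j : 'I_n) (y : 'rV[R]_n) :
  a + \sum_i b i * y ord0 i =
  a + \sum_i (if i == j then 0 else b i) * y ord0 i + b j * y ord0 j.
Proof.
rewrite (bigD1 j) //= [X in _ = _ + X + _](bigD1 j) //= eqxx mul0r add0r.
have -> : \sum_(i | i != j) (if i == j then 0 else b i) * y ord0 i =
          \sum_(i | i != j) b i * y ord0 i by apply: eq_bigr => i /negbTE ->.
ring.
Qed.

Lemma key (hc : forall s k, 0 <= m s ord0 k) d : forall (a : R) (b : 'I_n -> R),
  (forall i : 'I_n, (i < n - d)%N -> b i = 0) ->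
  (forall s, 0 <= a + \sum_i b i * MR s ord0 i) ->
  forall x : 'rV[R]_n, (forall i : 'I_n, (n - d <= i)%N -> good x i) ->
  0 <= a + \sum_i b i * x ord0 i.
Proof.
elim: d => [|d IH] a b hb hs x hx.
  have hz : forall y : 'rV[R]_n, \sum_i b i * y ord0 i = 0.
    by move=> y; apply: big1 => i _; rewrite hb ?mul0r // subn0.
  by have := hs (fun _ => true); rewrite !hz.
case: (leqP n d) => hnd.
  apply: IH => //.
  - by move=> i hi; apply: hb; lia.
  - by move=> i hi; apply: hx; lia.
have hj : (n - d.+1 < n)%N by lia.
pose j := Ordinal hj.
have hjv : (nat_of_ord j = n - d.+1)%N by [].
pose b0 i := if i == j then 0 else b i.
pose b1 i := b0 i - b j * g j i.
have hb0 : forall i : 'I_n, (i <= j)%N -> b0 i = 0.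
  move=> i hi; rewrite /b0; case: eqP => // /eqP hij; apply: hb.
  by rewrite -hjv ltn_neqAle hi andbT.
have hb1 : forall i : 'I_n, (i <= j)%N -> b1 i = 0.
  by move=> i hi; rewrite /b1 hb0 // /g ltnNge hi /= mulr0 subr0.
have I0 : forall y : 'rV[R]_n,
    a + \sum_i b i * y ord0 i = a + \sum_i b0 i * y ord0 i + b j * y ord0 j.
  by move=> y; exact: split_j.
have I1 : forall y : 'rV[R]_n, a + b j * (l j)%:~R + \sum_i b1 i * y ord0 i =
    a + \sum_i b0 i * y ord0 i + b j * Afun c l j y.
  move=> y.
  have -> : \sum_i b1 i * y ord0 i =
      \sum_i b0 i * y ord0 i + b j * \sum_i (- g j i) * y ord0 i.
    rewrite mulr_sumr -big_split; apply: eq_bigr => i _. by rewrite /b1 /=; ring.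
  rewrite Afun_g; ring.
have H0 : 0 <= a + \sum_i b0 i * x ord0 i.
  apply: IH.
  - by move=> i hi; apply: hb0; lia.
  - move=> s; have := hs (sflip s j true); rewrite I0 mRE /sflip eqxx /= mulr0 addr0.
    rewrite (@sum_local b0 j _ (MR s)) //.
    by apply: MR_agree => i ji; rewrite /= (ordF ji).
  - by move=> i hi; apply: hx; lia.
have H1 : 0 <= a + b j * (l j)%:~R + \sum_i b1 i * x ord0 i.
  apply: IH.
  - by move=> i hi; apply: hb1; lia.
  - move=> s; have := hs (sflip s j false); rewrite I0 mRE /sflip eqxx /= -I1.
    rewrite (@sum_local b1 j _ (MR s)) //.
    by apply: MR_agree => i ji; rewrite /= (ordF ji).
  - by move=> i hi; apply: hx; lia.
rewrite I1 in H1; rewrite I0.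
have := hx j; rewrite hjv leqnn => /(_ isT); rewrite /good => /andP[hx0 hxA].
by case: (lerP 0 (b j)) => hbj; nra.
Qed.

Lemma c_to_W (hc : forall s k, 0 <= m s ord0 k) : W.
Proof.
move=> k x hx; rewrite Afun_g; apply: (@key hc (n - k.+1)).
- move=> i hi; have hik : (i <= k)%N. have := ltn_ord k. lia. by rewrite /g ltnNge hik /= oppr0.
- by move=> s; rewrite -Afun_g Afun_MR MRE ler0z; exact: hc.
- by move=> i hi; apply: hx; have := ltn_ord k; lia.
Qed.


Lemma C_sub_PD (hW : W) (x : 'rV[R]_n) : GKsupport c l x -> PD c l x.
Proof.
move=> hx.
have : forall j, good x j.
  apply: down_ind => j IH; have hA := hW j x IH.
  case: (hx j) => [/andP[h1 h2]|//]; exfalso.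
  by have := lt_trans h1 h2; rewrite ltNge hA.
by [].
Qed.

Lemma PD_sub_C (x : 'rV[R]_n) : PD c l x -> GKsupport c l x.
Proof. by move=> h k; right; exact: h k. Qed.

Lemma construct (k : 'I_n) (y : 'rV[R]_n) (e : R) : 0 < e -> exists x : 'rV[R]_n,
  (forall i : 'I_n, (k < i)%N -> x ord0 i = y ord0 i) /\
  (forall i : 'I_n, (i <= k)%N ->
     ((Afun c l i x < x ord0 i < 0) \/ (0 <= x ord0 i <= Afun c l i x)) /\
     (- e <= x ord0 i <= 0)).
Proof.
move=> he.
have gen : forall d, (d <= k.+1)%N -> exists x : 'rV[R]_n,
  (forall i : 'I_n, (k < i)%N -> x ord0 i = y ord0 i) /\
  (forall i : 'I_n, (k.+1 - d <= i)%N -> (i <= k)%N ->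
     ((Afun c l i x < x ord0 i < 0) \/ (0 <= x ord0 i <= Afun c l i x)) /\
     (- e <= x ord0 i <= 0)).
  elim=> [|d IH] hd.
    by exists y; split => // i h1 h2; exfalso; lia.
  have [x [hxa hxg]] := IH (ltnW hd).
  have hj : (k - d < n)%N by have := ltn_ord k; lia.
  pose j := Ordinal hj.
  have hjv : (nat_of_ord j = k - d)%N by [].
  pose A := Afun c l j x.
  pose v := if 0 <= A then 0 else if A / 2 < - e then - e else A / 2.
  pose x' : 'rV[R]_n := \row_i (if i == j then v else x ord0 i).
  have x'E : forall i, x' ord0 i = if i == j then v else x ord0 i by move=> i; rewrite mxE.
  have Aj : forall i : 'I_n, (j <= i)%N -> Afun c l i x' = Afun c l i x.
    move=> i ji; apply: Afun_local => i' ii'.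
    by rewrite x'E (ordF (leq_ltn_trans ji ii')).
  exists x'; split.
    move=> i ki; rewrite x'E ordF ?hxa //; lia.
  move=> i h1 h2.
  case: (eqVneq i j) => [->|hij].
    rewrite (Aj j (leqnn _)) x'E eqxx -/A /v.
    case: ifP => hA.
      split; [right | ]; apply/andP; split => //; lra.
    move/negbT: hA; rewrite -ltNge => hA.
    case: ifP => hA2.
      split; [left | ]; apply/andP; split => //; lra.
    move/negbT: hA2; rewrite -leNgt => hA2.
    split; [left | ]; apply/andP; split => //; lra.
  have ji : (j < i)%N.
    rewrite ltn_neqAle eq_sym hij /=; lia.
  rewrite (Aj i (ltnW ji)) x'E (ordF ji); apply: hxg => //; lia.
have [x [hxa hxg]] := gen k.+1 (leqnn _).
exists x; split => // i hi; apply: hxg => //; lia.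
Qed.

Lemma notW (nW : ~ W) : ~ closed (GKsupport (R:=R) c l) /\ GKsupport (R:=R) c l <> PD c l.
Proof.
have [k [y [hy hA]]] : exists (k : 'I_n) (y : 'rV[R]_n), (forall i : 'I_n, (k < i)%N -> good y i) /\ Afun c l k y < 0.
  case: (pselect (exists (k : 'I_n) (y : 'rV[R]_n), (forall i : 'I_n, (k < i)%N -> good y i) /\ Afun c l k y < 0)) => // hne.
  exfalso; apply: nW => k y hy; rewrite leNgt; apply/negP => hlt; apply: hne.
  by exists k, y; split.
have mk : forall e, 0 < e -> exists x : 'rV[R]_n, GKsupport c l x /\ x ord0 k < 0 /\
    (forall i : 'I_n, (k < i)%N -> x ord0 i = y ord0 i) /\
    (forall i : 'I_n, (i <= k)%N -> - e <= x ord0 i <= 0).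
  move=> e he; have [x [hxa hxg]] := construct k y e he.
  have hAx : Afun c l k x = Afun c l k y by apply: Afun_local => i ki; exact: hxa.
  have hxC : GKsupport c l x.
    move=> i; case: (leqP i k) => hik; first by case: (hxg i hik).
    right; rewrite (hxa i hik) (_ : Afun c l i x = Afun c l i y); first exact: hy.
    apply: Afun_local => i' ii'; apply: hxa; exact: ltn_trans hik ii'.
  exists x; split => //; split; last first.
    by split => // i hi; case: (hxg i hi).
  case: (hxg k (leqnn _)) => [[/andP[_ //]|/andP[h1 h2]] _]; exfalso.
  by rewrite hAx in h2; have := le_trans h1 h2; rewrite leNgt hA.
split.
- move=> hcl.
  pose z : 'rV[R]_n := \row_i (if (k < i)%N then y ord0 i else 0).
  have hz : ~ GKsupport c l z.
    move=> /(_ k).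
    have hAz : Afun c l k z = Afun c l k y.
      by apply: Afun_local => i ki; rewrite mxE ki.
    rewrite hAz mxE ltnn.
    by case=> /andP[h1 h2]; lra.
  apply: hz; move/closure_id: hcl => ->.
  move=> B /nbhs_ballP [e /= he hB].
  have he2 : 0 < e / 2 by lra.
  have [x [hxC [_ [hxa hxb]]]] := mk _ he2.
  exists x; split => //; apply: hB.
  split => //= i j; rewrite (ord1 i) !mxE -ball_normE /=.
  case: (leqP j k) => hjk.
    have /andP[h1 h2] := hxb j hjk.
    rewrite sub0r normrN ltr_norml; apply/andP; split; lra.
  by rewrite hxa // subrr normr0.
- move=> hEq; have [x [hxC [hxk _]]] := mk 1 ltr01.
  rewrite hEq in hxC; have /andP[h0 _] := hxC k.
  by rewrite leNgt hxk in h0.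
Qed.

End S.

Lemma cont_sum (R : realType) (T : topologicalType) (I : eqType) (r : seq I) (P : pred I)
  (F : I -> T -> R) : (forall i, continuous (F i)) ->
  continuous (fun x => \sum_(i <- r | P i) F i x).
Proof.
move=> hF; elim: r => [|i r IH].
  have -> : (fun x => \sum_(i <- [::] | P i) F i x) = fun=> 0.
    by apply: funext => x; rewrite big_nil.
  exact: cst_continuous.
have -> : (fun x => \sum_(j <- i :: r | P j) F j x) =
    (fun x => (if P i then F i x else 0) + \sum_(j <- r | P j) F j x).
  by apply: funext => x; rewrite big_cons; case: (P i); rewrite ?add0r.
move=> x.
have h1 : (fun x => if P i then F i x else 0) @ x --> (if P i then F i x else 0).
  case: (P i); [exact: hF | exact: cvg_cst].
by have := cvgD h1 (IH x); apply.
Qed.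

Lemma Afun_cont (R : realType) n c l (j : 'I_n) : continuous (@Afun R n c l j).
Proof.
move=> x.
have h2 : continuous (fun y : 'rV[R]_n => \sum_(k < n | (j < k)%N) (c j k)%:~R * y ord0 k).
  apply: cont_sum => k y.
  by have := cvgM (cvg_cst ((c j k)%:~R : R)) (@coord_continuous R 1 n ord0 k y); apply.
by have := cvgB (cvg_cst ((l j)%:~R : R)) (h2 x); apply.
Qed.

Lemma PD_closed (R : realType) n c l : closed (@PD R n c l).
Proof.
have -> : @PD R n c l = \bigcap_(j in [set: 'I_n])
   ([set x : 'rV[R]_n | 0 <= x ord0 j] `&` [set x : 'rV[R]_n | 0 <= Afun c l j x - x ord0 j]).
  apply/seteqP; split => x /=.
    move=> hx j _; have /andP[h1 h2] := hx j; split => //=.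
    by rewrite subr_ge0.
  move=> hx j; have [h1 h2] := hx j I; rewrite /= subr_ge0 in h2.
  by rewrite h1 h2.
apply: closed_bigI => j _; apply: closedI.
  apply: (@preimage_closed _ _ (fun x : 'rV[R]_n => x ord0 j) [set r | 0 <= r]).
    by move=> x _; exact: coord_continuous.
  exact: closed_ge.
apply: (@preimage_closed _ _ (fun x : 'rV[R]_n => Afun c l j x - x ord0 j) [set r | 0 <= r]).
  move=> x _.
  by have := cvgB (Afun_cont R n c l j x) (@coord_continuous R 1 n ord0 j x); apply.
exact: closed_ge.
Qed.

Theorem proposition2p1 (R : realType) (n : nat) (hn : (1 <= n)%N)
  (c : 'I_n -> 'I_n -> int) (l : 'I_n -> int)
  (m : ('I_n -> bool) -> 'rV[int]_n) (hm : is_cartier_data c l m) :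
  let C := GKsupport (R:=R) c l in
  (closed (C : set 'rV[R]_n) <-> (forall s, C (toR R (m s)))) /\
  ((forall s, C (toR R (m s))) <-> (forall s (k : 'I_n), 0 <= m s ord0 k)) /\
  ((forall s (k : 'I_n), 0 <= m s ord0 k) <-> condP R c l) /\
  (condP R c l <-> C = PD (R:=R) c l).
Proof.
move=> C.
have hbc := b_iff_c R n c l m hm.
have hPW := condP_W R n c l.
have cW : (forall s (k : 'I_n), 0 <= m s ord0 k) <-> W R n c l.
  by split; [exact: (@c_to_W R n c l m hm) | exact: (@W_to_c R n c l m hm)].
have WE : W R n c l -> C = PD c l.
  move=> hW; apply/seteqP; split => x; [exact: (@C_sub_PD R n c l hW) | exact: PD_sub_C].
have Wdec : forall Q : Prop, (~ W R n c l -> ~ Q) -> Q -> W R n c l.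
  move=> Q hQ q; case: (pselect (W R n c l)) => // nW; exfalso; exact: hQ nW q.
split; last split; last split.
- split.
    move=> hcl; apply/hbc/cW.
    by apply: (Wdec _ (fun nW => (notW _ _ _ _ nW).1)).
  move=> hb; have hW : W R n c l by apply/cW/hbc.
  rewrite (WE hW); exact: PD_closed.
- exact: hbc.
- exact: (iff_trans cW (iff_sym hPW)).
- split; first by move/hPW; exact: WE.
  move=> hE; apply/hPW; by apply: (Wdec _ (fun nW => (notW _ _ _ _ nW).2)).
Qed.
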